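(* Let $V$ be a finite set of variables and let $D_{\mathit{dag}}$ be the ABA framework defined in the context. For each semantics $\sigma\in\{\text{complete},\text{preferred},\text{stable}\}$, $$\{(V,\{(x,y)\mid \mathit{arr}_{xy}\in S\})\mid S\in\sigma(D_{\mathit{dag}})\}=\{G\mid G \text{ is a directed acyclic graph with node set } V\}.$$
   Context: Assumption-based argumentation (ABA). An ABA framework (ABAF) is a tuple $D=(\mathcal L,\mathcal R,\mathcal A,\overline{\cdot})$ where $\mathcal L$ is a set of sentences, $\mathcal R$ is a set of rules $a_0\leftarrow a_1,\dots,a_n$ ($n\ge 0$, $a_i\in\mathcal L$; head $a_0$, body $\{a_1,\dots,a_n\}$), $\mathcal A\subseteq\mathcal L$ is a set of assumptions and $\overline{\cdot}:\mathcal A\to\mathcal L$ is the contrary function. For $S\subseteq\mathcal A$ and $q\in\mathcal L$, $S\vdash q$ if there is a finite rooted labelled tree whose root is labelled $q$, whose set of leaf labels is $S$ or $S\cup\{\top\}$, and in which every inner node is labelled $\mathrm{head}(r)$ for some $r\in\mathcal R$ and has exactly $|\mathrm{body}(r)|$ children labelled by the distinct elements of $\mathrm{body}(r)$ (or a single child $\top$ if the body is empty). $S$ attacks $T\subseteq\mathcal A$ if there are $S'\subseteq S$ and $a\in T$ with $S'\vdash\overline a$. $S$ is conflict-free if it does not attack itself; $S$ defends $T$ if $S$ attacks every set of assumptions that attacks $T$; $S$ is admissible if it is conflict-free and defends itself; complete if admissible and it contains every assumption set it defends; preferred if it is $\subseteq$-maximal among complete sets; stable if it is admissible and attacks $\{a\}$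 for every $a\in\mathcal A\setminus S$. $\sigma(D)$ denotes the set of $\sigma$-extensions. The framework $D_{\mathit{dag}}$. Let $V$ be a finite set of variables. Let $\mathcal A_{\mathit{arr}}=\{\mathit{arr}_{xy}\mid x,y\in V,x\ne y\}$ (the assumption $\mathit{arr}_{xy}$ stands for the arrow $(x,y)$), and for each unordered pair $\{x,y\}$ of distinct variables let $\mathit{noe}_{xy}=\mathit{noe}_{yx}$ be a single assumption (''no edge between $x$ and $y$''). $D_{\mathit{dag}}$ has assumptions $\mathcal A_{\mathit{dag}}=\mathcal A_{\mathit{arr}}\cup\{\mathit{noe}_{xy}\}$, each assumption $a$ has its own distinct contrary $\overline a$ (a fresh sentence), and the rules are: (i) $\overline a\leftarrow b$ for all distinct $a,b\in\{\mathit{arr}_{xy},\mathit{arr}_{yx},\mathit{noe}_{xy}\}$, for all distinct $x,y\in V$; (ii) for each sequence $x_1\dots x_k$ of variables with consecutive elements distinct and $x_1=x_k$, and each $1\le i<k$, the rule $\overline{\mathit{arr}_{x_ix_{i+1}}}\leftarrow \mathit{arr}_{x_1x_2},\dots,\mathit{arr}_{x_{k-1}x_k}$. *)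

(* Defs.v *)
From Stdlib Require List.
From mathcomp Require Import all_boot.
Set Implicit Arguments.
Unset Strict Implicit.
Unset Printing Implicit Defensive.

(* An ABAF (L, R, A, contrary).  Rules are given as a predicate on
   (head, body), the body being listed as a sequence (only the set of its
   elements matters).  Sets of sentences are predicates. *)
Record ABAF := {
  sent : eqType;
  rule : sent -> seq sent -> Prop;
  is_asm : sent -> Prop;
  contrary : sent -> sent             (* contrary (only used on A) *)
}.

(* Finite rooted labelled trees; label [None] stands for the symbol T (top). *)
Inductive dtree (L : Type) : Type := DNode of option L & seq (dtree L).

Definition dlabel L (t : dtree L) : option L := let: DNode l _ := t in l.
Definition dkids L (t : dtree L) : seq (dtree L) := let: DNode _ ks := t in ks.

Fixpoint dnodes L (t : dtree L) : seq (dtree L) :=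
  let: DNode _ ks := t in t :: flatten (map (@dnodes L) ks).

Definition valid_tree (D : ABAF) (t : dtree (sent D)) : Prop :=
  forall n, List.In n (dnodes t) -> dkids n <> [::] ->
    exists h body, dlabel n = Some h /\ @rule D h body /\
      (if body is [::] then map (@dlabel _) (dkids n) = [:: None]
       else uniq (map (@dlabel _) (dkids n)) /\
            forall l, l \in map (@dlabel _) (dkids n) <->
                      exists2 b, b \in body & l = Some b).

(* S |- q : there is a valid tree with root q whose set of leaf labels is
   S or S u {T}. *)
Definition derives (D : ABAF) (S : sent D -> Prop) (q : sent D) : Prop :=
  exists t : dtree (sent D),
    dlabel t = Some q /\ valid_tree t /\
    (forall a, S a <->
       exists n, [/\ List.In n (dnodes t), dkids n = [::] & dlabel n = Some a]) /\
    (forall n, List.In n (dnodes t) -> dkids n = [::] ->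
       dlabel n = None \/ exists2 a, dlabel n = Some a & S a).

Definition asm_set (D : ABAF) (S : sent D -> Prop) := forall a, S a -> @is_asm D a.
Definition subset_of (L : Type) (S T : L -> Prop) := forall a, S a -> T a.

Definition attacks (D : ABAF) (S T : sent D -> Prop) : Prop :=
  exists S', subset_of S' S /\ exists a, T a /\ derives S' (@contrary D a).

Definition conflict_free (D : ABAF) (S : sent D -> Prop) := ~ attacks S S.

Definition defends (D : ABAF) (S T : sent D -> Prop) :=
  forall U, asm_set U -> attacks U T -> attacks S U.

Definition admissible (D : ABAF) (S : sent D -> Prop) :=
  asm_set S /\ conflict_free S /\ defends S S.

Definition complete (D : ABAF) (S : sent D -> Prop) :=
  admissible S /\ forall T, asm_set T -> defends S T -> subset_of T S.

Definition preferred (D : ABAF) (S : sent D -> Prop) :=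
  complete S /\ forall T, complete T -> subset_of S T -> subset_of T S.

Definition stable (D : ABAF) (S : sent D -> Prop) :=
  admissible S /\
  forall a, @is_asm D a -> ~ S a -> attacks S (fun b => b = a).

Inductive semantics := Complete | Preferred | Stable.

Definition sigma_ext (sg : semantics) (D : ABAF) (S : sent D -> Prop) : Prop :=
  match sg with
  | Complete => complete S
  | Preferred => preferred S
  | Stable => stable S
  end.

(* Assumption names: inl (x,y) is arr_xy, inr e (e a 2-element set {x,y})
   is noe_xy = noe_yx.  A sentence is (true, a) for the assumption a
   itself, or (false, a) for its (fresh, distinct) contrary. *)
Definition dag_asm_name (V : finType) := ((V * V) + {set V})%type.
Definition dag_sent (V : finType) := (bool * dag_asm_name V)%type.

Definition arr (V : finType) (x y : V) : dag_sent V := (true, inl (x, y)).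
Definition noe (V : finType) (x y : V) : dag_sent V := (true, inr [set x; y]).
Definition dag_contrary (V : finType) (s : dag_sent V) : dag_sent V := (false, s.2).

Definition dag_is_asm (V : finType) (s : dag_sent V) : Prop :=
  (exists x y : V, x != y /\ s = arr x y) \/
  (exists x y : V, x != y /\ s = noe x y).

Definition dag_rule (V : finType) (h : dag_sent V) (body : seq (dag_sent V)) : Prop :=
  (exists x y : V, x != y /\
     exists a b, [/\ a \in [:: arr x y; arr y x; noe x y],
                     b \in [:: arr x y; arr y x; noe x y], a != b,
                     h = dag_contrary a & body = [:: b]])
  \/
  (* (ii) for x1 ... xk with consecutive elements distinct and x1 = xk,
     contrary(arr_{x_i x_{i+1}}) <- arr_{x1x2}, ..., arr_{x_{k-1}x_k} *)
  (exists (x1 : V) (p : seq V),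
     [/\ path (fun a b => a != b) x1 p, last x1 p = x1,
         body = [seq arr e.1 e.2 | e <- zip (x1 :: p) p] &
         exists2 i, i < size p &
           h = dag_contrary (arr (nth x1 (x1 :: p) i) (nth x1 (x1 :: p) i.+1))]).

Definition D_dag (V : finType) : ABAF :=
  {| sent := dag_sent V;
     rule := @dag_rule V;
     is_asm := @dag_is_asm V;
     contrary := @dag_contrary V |}.

(* A directed graph with node set V is an edge relation on V; it is
   acyclic if it has no directed cycle (self-loops included). *)
Definition acyclic (V : finType) (G : rel V) : Prop :=
  forall (x : V) (p : seq V), path G x p -> last x p = x -> p = [::].

(* Main.v *)
Require Import Defs.
From mathcomp Require Import all_boot.
From Stdlib Require Import Classical ClassicalEpsilon.
Set Implicit Arguments.
Unset Strict Implicit.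
Unset Printing Implicit Defensive.

Lemma In_mem (T : eqType) (x : T) s : List.In x s <-> x \in s.
Proof.
elim: s => [|y s IH] /=; first by rewrite in_nil.
rewrite in_cons; split.
  by case=> [->|/IH ->]; rewrite ?eqxx ?orbT.
by case/orP=> [/eqP->|/IH]; auto.
Qed.

Lemma leafs_flat (L : Type) (s : seq L) :
  flatten (map (@dnodes L) (map (fun b => DNode (Some b) [::]) s)) =
  map (fun b => DNode (Some b) [::]) s.
Proof. by elim: s => //= b s ->. Qed.

Lemma derive_flat (D : ABAF) (h : sent D) (body : seq (sent D)) :
  @rule D h body -> body <> [::] -> @derives D (fun s => s \in body) h.
Proof.
move=> Hr Hne.
set lf := fun b : sent D => DNode (Some b) [::].
exists (DNode (Some h) (map lf (undup body))).
have Hd : dnodes (DNode (Some h) (map lf (undup body))) =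
   DNode (Some h) (map lf (undup body)) :: map lf (undup body).
  by rewrite /= leafs_flat.
have Hne' : map lf (undup body) <> [::].
  case: body Hne Hr {Hd} => // b s _ _ E.
  have : b \in undup (b :: s) by rewrite mem_undup mem_head.
  by move: E; case: (undup (b :: s)).
split; first done.
split.
  move=> n; rewrite Hd => -[<-|]; last first.
    by move=> /List.in_map_iff [x [<- _]] /=.
  move=> _; exists h, body; split => //; split => //.
  have H1 : uniq (map (@dlabel _) (map lf (undup body))).
    by rewrite -map_comp map_inj_uniq ?undup_uniq // => ? ? [].
  have H2 : forall l, l \in map (@dlabel _) (map lf (undup body)) <->
                      exists2 b, b \in body & l = Some b.
    move=> l; rewrite -map_comp; split.
      by case/mapP => x; rewrite mem_undup => Hx ->; exists x.
    by case=> x Hx ->; apply/mapP; exists x => //; rewrite mem_undup.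
  clear Hd Hne'; move: Hr Hne H1 H2; case: body => [|b s] // _ _ H1 H2.
split.
  move=> a; split.
    move=> Ha; exists (lf a); split => //.
    rewrite Hd; right; apply/List.in_map_iff; exists a; split => //.
    by apply/In_mem; rewrite mem_undup.
  case=> n [Hn Hk Hl]; move: Hn; rewrite Hd => -[E|].
    by subst n; exfalso; exact: (Hne' Hk).
  move/List.in_map_iff => [x [E Hx]]; subst n.
  case: Hl => <-; move/In_mem: Hx; by rewrite mem_undup.
move=> n; rewrite Hd => -[E|/List.in_map_iff [x [E Hx]]] Hk.
  by subst n; exfalso; exact: (Hne' Hk).
right; exists x; first by rewrite -E.
by move/In_mem: Hx; rewrite mem_undup.
Qed.

Lemma stable_complete (D : ABAF) (S : sent D -> Prop) : stable S -> complete S.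
Proof.
case=> Had Hst; split => // T HT Hdef t Tt.
apply: NNPP => nSt.
have [S' [HS' [a [Ea Hd]]]] := Hst t (HT t Tt) nSt.
subst a.
have HU : asm_set S' by move=> s /HS'; apply: Had.1.
have [S'' [HS'' [b [Ub Hb]]]] :=
  Hdef S' HU (ex_intro _ S' (conj (fun _ h => h) (ex_intro _ t (conj Tt Hd)))).
case: Had => _ [Hcf _]; apply: Hcf.
exists S''; split => //; exists b; split => //; exact: HS'.
Qed.

Lemma stable_preferred (D : ABAF) (S : sent D -> Prop) : stable S -> preferred S.
Proof.
move=> Hs; split; first exact: stable_complete.
case: Hs => _ Hst.
move=> T [[HT [HcfT _]] _] HST t Tt; apply: NNPP => nSt.
have [S' [HS' [a [Ea Hd]]]] := Hst t (HT t Tt) nSt.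
subst a; apply: HcfT; exists S'; split.
  by move=> s /HS' /HST.
by exists t; split.
Qed.

Definition SG (V : finType) (G : rel V) (s : dag_sent V) : Prop :=
  (exists x y : V, G x y /\ s = arr x y) \/
  (exists x y : V, [/\ x != y, ~~ G x y, ~~ G y x & s = noe x y]).

Lemma SG_true (V : finType) (G : rel V) s : SG G s -> s.1 = true.
Proof. by case=> [[x [y [_ ->]]]|[x [y [_ _ _ ->]]]]. Qed.

Lemma asm_true (V : finType) (s : dag_sent V) : dag_is_asm s -> s.1 = true.
Proof. by case=> [[x [y [_ ->]]]|[x [y [_ ->]]]]. Qed.

Lemma asm_arr (V : finType) (a b : V) : dag_is_asm (arr a b) -> a != b.
Proof.
case=> [[x [y [nxy E]]]|[x [y [_ E]]]].
  by move: E; rewrite /arr => -[-> ->].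
by move: E; rewrite /arr /noe => -[].
Qed.

Lemma noe_eq (V : finType) (x y x' y' : V) : x != y -> noe x y = noe x' y' ->
  (x = x' /\ y = y') \/ (x = y' /\ y = x').
Proof.
move=> nxy; rewrite /noe => -[E].
have : x \in [set x'; y'] by rewrite -E set21.
have : y \in [set x'; y'] by rewrite -E set22.
rewrite !in_set2 => /orP[/eqP Hy|/eqP Hy] /orP[/eqP Hx|/eqP Hx].
- by rewrite Hx Hy eqxx in nxy.
- by right.
- by left.
- by rewrite Hx Hy eqxx in nxy.
Qed.

Lemma SG_arr (V : finType) (G : rel V) x y : SG G (arr x y) <-> G x y.
Proof.
split.
  case=> [[x' [y' [H E]]]|[x' [y' [_ _ _ E]]]].
    by move: E; rewrite /arr => -[-> ->].
  by move: E; rewrite /arr /noe => -[].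
by move=> H; left; exists x, y.
Qed.

Lemma SG_noe (V : finType) (G : rel V) x y : x != y -> SG G (noe x y) <-> (~~ G x y /\ ~~ G y x).
Proof.
move=> nxy; split.
  case=> [[x' [y' [H E]]]|[x' [y' [_ H1 H2 E]]]].
    by move: E; rewrite /arr /noe => -[].
  by case: (noe_eq nxy E) => -[-> ->].
by case=> H1 H2; right; exists x, y.
Qed.

Lemma acyc_loop (V : finType) (G : rel V) : acyclic G -> forall x, ~~ G x x.
Proof.
move=> Ha x; apply/negP => H.
by have := Ha x [:: x]; rewrite /= H => /(_ isT erefl).
Qed.

Lemma acyc_2 (V : finType) (G : rel V) x y : acyclic G -> G x y -> G y x -> False.
Proof.
move=> Ha H1 H2.
by have := Ha x [:: y; x]; rewrite /= H1 H2 => /(_ isT erefl).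
Qed.

Lemma path_of_zip (V : finType) (G : rel V) x p :
  (forall e, e \in zip (x :: p) p -> G e.1 e.2) -> path G x p.
Proof.
elim: p x => //= y p IH x H.
apply/andP; split; first exact: (H (x, y) (mem_head _ _)).
by apply: IH => e He; apply: H; rewrite in_cons He orbT.
Qed.

Lemma zip_of_path (V : finType) (G : rel V) x p :
  path G x p -> forall e, e \in zip (x :: p) p -> G e.1 e.2.
Proof.
elim: p x => //= y p IH x /andP[Hxy Hp] e.
by rewrite in_cons => /orP[/eqP->//|]; exact: IH.
Qed.

Lemma rule_head (V : finType) (h : dag_sent V) body : dag_rule h body -> h.1 = false.
Proof.
by case=> [[x [y [_ [a [b [_ _ _ -> _]]]]]]|[x1 [p [_ _ _ [i _ ->]]]]].
Qed.

Lemma rule_body (V : finType) (h : dag_sent V) body : dag_rule h body ->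
  forall b, b \in body -> b.1 = true.
Proof.
case=> [[x [y [_ [a [b [_ Hb _ _ ->]]]]]]|[x1 [p [_ _ -> _]]]] c.
  by rewrite inE => /eqP ->; move: Hb; rewrite !inE => /or3P[]/eqP->.
by case/mapP => e _ ->.
Qed.

Lemma rule_nonempty (V : finType) (h : dag_sent V) : dag_rule h [::] -> False.
Proof.
case=> [[x [y [_ [a [b [_ _ _ _ //]]]]]]|[x1 [p [_ _ E [i Hi _]]]]].
by case: p E Hi.
Qed.

Lemma in_map_label (L : eqType) (ks : seq (dtree L)) l :
  l \in map (@dlabel L) ks -> exists k, List.In k ks /\ dlabel k = l.
Proof.
elim: ks => //= k ks IH; rewrite in_cons => /orP[/eqP->|/IH [k' [H1 H2]]].
  by exists k; split; [left|].
by exists k'; split; [right|].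
Qed.

Lemma In_catl T (x : T) s1 s2 : List.In x s1 -> List.In x (s1 ++ s2).
Proof. elim: s1 => //= y s IH [->|H]; [left|right; apply: IH] => //. Qed.

Lemma In_catr T (x : T) s1 s2 : List.In x s2 -> List.In x (s1 ++ s2).
Proof. elim: s1 => //= y s IH H; right; auto. Qed.

Lemma In_dnodes_kid L (l : option L) ks k :
  List.In k ks -> List.In k (dnodes (DNode l ks)).
Proof.
move=> H; rewrite /=; right.
elim: ks H => //= k' ks IH [E|H].
  by subst k'; apply: In_catl; clear IH; case: k => ? ? /=; left.
by apply: In_catr; apply: IH.
Qed.

Lemma derive_inv (V : finType) (S' : dag_sent V -> Prop) q :
  @derives (D_dag V) S' q -> (forall s, S' s -> s.1 = true) -> q.1 = false ->
  exists body, dag_rule q body /\ forall b, b \in body -> S' b.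
Proof.
case=> [[l ks] [/= El [Hv [_ Hleaf]]]] HS Hq; subst l.
case Eks: ks => [|k0 ks'].
  have := Hleaf (DNode (Some q) ks) (or_introl erefl).
  rewrite Eks => /(_ erefl) [//|[a [<-] /HS]].
  by rewrite Hq.
have Hne : dkids (DNode (Some q) ks) <> [::] by rewrite Eks.
have [h [body [Eh [Hr Hb]]]] := Hv (DNode (Some q) ks) (or_introl erefl) Hne.
case: Eh => Eh; subst h.
exists body; split => //.
move=> b Hbb.
case: body Hr Hb Hbb => [|b0 bs] Hr Hb Hbb //.
have := (Hb.2 (Some b)).2 (ex_intro2 _ _ b Hbb erefl).
move=> /in_map_label [k [Hk Ek]].
have Hkn := In_dnodes_kid (Some q) Hk.
case Ekk: (dkids k) => [|k1 kk].
  have [|[a Ea Sa]] := Hleaf k Hkn Ekk; first by rewrite Ek.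
  by move: Ea; rewrite Ek => -[->].
have Hne2 : dkids k <> [::] by rewrite Ekk.
have [h' [body' [Eh' [Hr' _]]]] := Hv k Hkn Hne2.
move: Eh'; rewrite Ek => -[Ebh].
have := rule_head Hr'; rewrite -Ebh.
by rewrite (rule_body Hr Hbb).
Qed.

Lemma SG_cf (V : finType) (G : rel V) : acyclic G -> forall a body, SG G a ->
  dag_rule (dag_contrary a) body -> (forall b, b \in body -> SG G b) -> False.
Proof.
move=> Ha a body Sa [[x [y [nxy [a' [b [Ha' Hb nab Ec Eb]]]]]]|[x1 [p [_ Hl Eb [i Hi _]]]]] Hsub; last first.
have Hp : path G x1 p.
  apply: path_of_zip => e He; apply/SG_arr; apply: Hsub; rewrite Eb.
  by apply/mapP; exists e.
by move: Hi; rewrite (Ha x1 p Hp Hl).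
  have Eaa : a = a'.
    have : a'.1 = true by move: Ha'; rewrite !inE => /or3P[]/eqP->.
    move: Ec (SG_true Sa); rewrite /dag_contrary.
    by case: a a' {Sa Ha' nab} => [a1 a2] [a1' a2'] /= [->] -> ->.
  subst a'.
  have Sb : SG G b by apply: Hsub; rewrite Eb mem_head.
  move: Ha' Hb nab Sa Sb; rewrite !inE => /or3P[]/eqP-> /or3P[]/eqP-> //; rewrite ?eqxx //.
  all: move=> _ S1 S2.
  all: repeat match goal with
    | H : SG _ (arr _ _) |- _ => move/SG_arr: H => H
    | H : SG _ (noe _ _) |- _ => move/(SG_noe _ nxy): H => [? ?]
    end.
  all: try by apply: (acyc_2 Ha); eassumption.
  all: match goal with
       | H : is_true (?g ?a ?b), H' : is_true (~~ ?g ?a ?b) |- _ => by rewrite H in H'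
       end.
Qed.

Lemma arr_neq (V : finType) (x y : V) : x != y -> arr x y != arr y x.
Proof. by move=> nxy; apply/eqP; rewrite /arr => -[Exy _]; rewrite Exy eqxx in nxy. Qed.

Lemma arr_noe (V : finType) (a b c d : V) : arr a b != noe c d.
Proof. by apply/eqP; rewrite /arr /noe. Qed.

Lemma S_total (V : finType) (G : rel V) c : dag_is_asm c -> ~ SG G c ->
  exists b, SG G b /\ @derives (D_dag V) (fun s => s \in [:: b]) (dag_contrary c).
Proof.
have Hd : forall x y a b, x != y -> a \in [:: arr x y; arr y x; noe x y] ->
    b \in [:: arr x y; arr y x; noe x y] -> a != b ->
    @derives (D_dag V) (fun s => s \in [:: b]) (dag_contrary a).
  move=> x y a b nxy Ha Hb nab; apply: derive_flat => //.
  by left; exists x, y; split=> //; exists a, b; split.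
case=> [[x [y [nxy ->]]]|[x [y [nxy ->]]]] nS.
  have nG : ~~ G x y by apply/negP => H; apply: nS; apply/SG_arr.
  case Hyx: (G y x).
    exists (arr y x); split; first exact/SG_arr.
    by apply: (Hd x y) => //; rewrite ?arr_neq // !inE eqxx ?orbT.
  exists (noe x y); split; first by apply/SG_noe => //; rewrite Hyx.
  by apply: (Hd x y) => //; rewrite ?arr_noe // !inE eqxx ?orbT.
case Hxy: (G x y).
  exists (arr x y); split; first exact/SG_arr.
  by apply: (Hd x y) => //; rewrite ?(eq_sym (noe _ _)) ?arr_noe // !inE eqxx ?orbT.
case Hyx: (G y x); last first.
  by exfalso; apply: nS; apply/SG_noe => //; rewrite Hxy Hyx.
exists (arr y x); split; first exact/SG_arr.
by apply: (Hd x y) => //; rewrite ?(eq_sym (noe _ _)) ?arr_noe // !inE eqxx ?orbT.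
Qed.

Theorem proposition1 (V : finType) (sg : semantics) :
  (forall S : sent (D_dag V) -> Prop, sigma_ext sg S ->
     exists G : rel V, acyclic G /\ forall x y : V, G x y <-> S (arr x y)) /\
  (forall G : rel V, acyclic G ->
     exists S : sent (D_dag V) -> Prop, sigma_ext sg S /\
       forall x y : V, G x y <-> S (arr x y)).
Proof.
split.
  move=> S Hs.
  have [HA [HCF _]] : admissible S.
    by case: sg Hs => [[H _]|[[H _] _]|[H _]].
  set Gb := fun x y : V => if excluded_middle_informative (S (arr x y)) then true else false.
  have HGb : forall x y, Gb x y <-> S (arr x y).
    move=> x y; rewrite /Gb.
    by case: (excluded_middle_informative (S (arr x y))) => [H|H]; split => // /H.
  exists Gb; split => //.
  move=> x [|y p] // Hp Hl; exfalso; apply: HCF.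
  exists (fun s => s \in [seq arr e.1 e.2 | e <- zip (x :: y :: p) (y :: p)]); split.
    move=> s /mapP [e He ->]; apply/HGb; exact: zip_of_path Hp e He.
  exists (arr x y); split.
    by apply/HGb; case/andP: Hp.
  apply: derive_flat => //.
  right; exists x, (y :: p); split => //.
    by apply: sub_path Hp => a b /HGb /HA /asm_arr.
  by exists 0.
move=> G HG; exists (SG G); split; last first.
  by move=> x y; split; [move=> H; apply/SG_arr | move/SG_arr].
have Hst : @stable (D_dag V) (SG G).
  have HA : @asm_set (D_dag V) (SG G).
    move=> s [[x [y [Hxy ->]]]|[x [y [nxy _ _ ->]]]]; [left|right]; exists x, y; split => //.
    apply/eqP => Exy; move: Hxy; rewrite Exy; apply/negP; exact: acyc_loop.
  have HCF : @conflict_free (D_dag V) (SG G).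
    move=> [S' [HS' [a [Sa Hd]]]].
    have [body [Hr Hb]] := derive_inv Hd (fun s Hs => SG_true (HS' s Hs)) erefl.
    apply: (@SG_cf V G HG a body Sa Hr) => b Hb'; apply: HS'; exact: Hb.
  split; last first.
    move=> a Ha nS; have [b [Sb Hd]] := S_total Ha nS.
    exists (fun s => s \in [:: b]); split.
      by move=> s; rewrite inE => /eqP ->.
    by exists a; split.
  split => //; split => //.
  move=> U HU [U' [HU' [a [Sa Hd]]]].
  have [body [Hr Hb]] := derive_inv Hd (fun s Hs => asm_true (HU s (HU' s Hs))) erefl.
  have [c [Hc nSc]] : exists c, c \in body /\ ~ SG G c.
    apply: NNPP => Hn; apply: (SG_cf HG Sa Hr) => b Hbb.
    apply: NNPP => nb; apply: Hn; by exists b.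
  have Uc : U c := HU' c (Hb c Hc).
  have [b [Sb Hdb]] := S_total (HU c Uc) nSc.
  exists (fun s => s \in [:: b]); split; first by move=> s; rewrite inE => /eqP ->.
  by exists c.
case: sg; [exact: stable_complete | exact: stable_preferred | exact: Hst].
Qed.
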